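(* Let $T$ be a tree of order $n$ and diameter $d$ with maximum Wiener index, and let $x$ be a leaf of $T$. Then ${\rm ecc}(x)=d$.
   Context: All graphs are finite and simple. The Wiener index of a connected graph $G$ is $W(G)=\sum_{\{u,v\}\subseteq V(G)} d(u,v)$. A tree $T$ of order $n$ and diameter $d$ has maximum Wiener index if $W(T')\leq W(T)$ for every tree $T'$ of order $n$ and diameter $d$. A leaf is a vertex of degree $1$. The eccentricity ${\rm ecc}(v)$ of a vertex $v$ is the maximum distance from $v$ to a vertex of the graph. *)

(* Defs.v *)
From mathcomp Require Import all_boot.
Set Implicit Arguments. Unset Strict Implicit. Unset Printing Implicit Defensive.

Section Graphs.
Variables (V : finType) (e : rel V).

Definition simple_graph : Prop := symmetric e /\ irreflexive e.

Definition connected : Prop := forall u v : V, connect e u v.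

Definition acyclic : Prop := forall c : seq V, 3 <= size c -> ~~ ucycleb e c.

Definition is_tree : Prop := [/\ simple_graph, connected & acyclic].

Definition reach (k : nat) (u v : V) : bool :=
  [exists p : k.-tuple V, path e u p && (last u p == v)].

(* distance = least k with a walk of length k (shortest walks are paths of
   length < #|V| in a connected graph; returns #|V| if v unreachable) *)
Definition dist (u v : V) : nat := find (fun k => reach k u v) (iota 0 #|V|).

Definition ecc (u : V) : nat := \max_(v : V) dist u v.

Definition diameter : nat := \max_(u : V) ecc u.

(* sum over unordered pairs = half of the sum over ordered pairs *)
Definition wiener : nat := (\sum_(u : V) \sum_(v : V) dist u v)./2.

Definition leaf (x : V) : bool := #|[pred y | e x y]| == 1.

End Graphs.

(* Main.v *)
Require Import Defs.
From mathcomp Require Import all_boot zify.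
Set Implicit Arguments. Unset Strict Implicit. Unset Printing Implicit Defensive.

Section Dist.
Variables (V : finType) (e : rel V).

Lemma reachP k u v : reflect (exists p : seq V, [/\ size p = k, path e u p & last u p = v]) (reach e k u v).
Proof.
apply: (iffP existsP) => [[p /andP[pp /eqP lp]] | [p [sp pp lp]]].
  by exists (tval p); rewrite size_tuple.
have sp' : size p == k by rewrite sp.
by exists (Tuple sp'); rewrite /= pp lp eqxx.
Qed.

Lemma dist_le k u v : k < #|V| -> reach e k u v -> dist e u v <= k.
Proof.
rewrite /dist => hk hr; rewrite leqNgt; apply/negP => hlt.
have := before_find 0 hlt; rewrite nth_iota // add0n hr //.
Qed.

Lemma dist_reach u v : connect e u v -> reach e (dist e u v) u v /\ dist e u v < #|V|.
Proof.
move=> /connectP[p pp ->]; case: (shortenP pp) => p' pp' up' _.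
have hs : (size p').+1 <= #|V|.
  by move/card_uniqP: up' => /= <-; apply: max_card.
have hh : has (fun k => reach e k u (last u p')) (iota 0 #|V|).
  apply/hasP; exists (size p'); first by rewrite mem_iota.
  by apply/reachP; exists p'; split.
have hf : find (fun k => reach e k u (last u p')) (iota 0 #|V|) < #|V|.
  by rewrite -[X in _ < X](size_iota 0 #|V|) -has_find.
split => //; have := nth_find 0 hh; rewrite nth_iota // add0n //.
Qed.

Lemma reach0 u v : reach e 0 u v = (u == v).
Proof.
apply/reachP/eqP => [[p [sp _ <-]]|->]; first by case: p sp.
by exists [::].
Qed.

Lemma reachS k u v : reach e k.+1 u v -> exists w, e u w /\ reach e k w v.
Proof.
move=> /reachP [[|w p] [//= [sp] /andP[euw pp] lp]].
by exists w; split => //; apply/reachP; exists p.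
Qed.

Lemma reach_cons k u w v : e u w -> reach e k w v -> reach e k.+1 u v.
Proof.
move=> euw /reachP [p [sp pp lp]]; apply/reachP; exists (w :: p).
by rewrite /= sp euw pp.
Qed.

Hypothesis econ : connected e.

Lemma distuu u : dist e u u = 0.
Proof.
apply/eqP; rewrite -leqn0; apply: dist_le; last by rewrite reach0.
by apply/card_gt0P; exists u.
Qed.

Lemma dist0 u v : dist e u v = 0 -> u = v.
Proof. by move=> h; have [+ _] := dist_reach (econ u v); rewrite h reach0 => /eqP. Qed.

Lemma distD1 u w v : e u w -> dist e u v <= (dist e w v).+1.
Proof.
move=> euw; have [r1 l1] := dist_reach (econ w v); have [r2 l2] := dist_reach (econ u v).
case: (ltnP (dist e w v).+1 #|V|) => h; first by apply: dist_le => //; apply: reach_cons r1.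
by apply: leq_trans (ltnW l2) h.
Qed.

Lemma distD2 u v : u != v -> exists w, e u w /\ dist e u v = (dist e w v).+1.
Proof.
move=> neq; have [r l] := dist_reach (econ u v).
case E: (dist e u v) r => [|k] r; first by rewrite reach0 (negbTE neq) in r.
have [w [euw rw]] := reachS r; exists w; split => //.
have h1 : dist e w v <= k by apply: dist_le => //; rewrite E in l; apply: ltnW.
have h2 := distD1 v euw; lia.
Qed.


Lemma dist_tri u w v : dist e u v <= dist e u w + dist e w v.
Proof.
move: {2}(dist e u w) (leqnn (dist e u w)) => n; elim: n u => [|n IH] u hu.
  by move: hu; rewrite leqn0 => /eqP/dist0 ->; rewrite distuu.
case: (eqVneq u w) => [->|neq]; first by rewrite distuu.
have [z [euz hz]] := distD2 neq.
have := IH z; rewrite -ltnS -hz => /(_ hu) h.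
by apply: leq_trans (distD1 v euz) _; rewrite hz addSn ltnS.
Qed.

Hypothesis e_sym : symmetric e.

Lemma dist_sym u v : dist e u v = dist e v u.
Proof.
suff H : forall u v, dist e v u <= dist e u v by apply/eqP; rewrite eqn_leq !H.
move=> {}u {}v; move: {2}(dist e u v) (leqnn (dist e u v)) => n.
elim: n u => [|n IH] u hu.
  by move: hu; rewrite leqn0 => /eqP/dist0 ->; rewrite distuu.
case: (eqVneq u v) => [->|neq]; first by rewrite distuu.
have [w [euw hw]] := distD2 neq.
have h1 : dist e v w <= dist e w v by apply: IH; rewrite -ltnS -hw.
have h2 : dist e w u <= 1 by have := distD1 u (w:=u) (u:=w); rewrite e_sym euw distuu; apply.
have := dist_tri v w u; lia.
Qed.

Lemma walk_down m w v : dist e w v = m ->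
  exists p, [/\ path e w p, last w p = v & forall z, z \in p -> dist e z v < m].
Proof.
elim: m w => [|m IH] w h.
  by exists [::]; split => //; exact: dist0 h.
have neq : w != v by apply/eqP => E; rewrite E distuu in h.
have [z [ewz hz]] := distD2 neq; rewrite h in hz; case: hz => hz.
have [p [pp lp hp]] := IH z (esym hz).
exists (z :: p); split => //=; first by rewrite ewz.
move=> y; rewrite inE => /orP[/eqP ->|/hp]; first by rewrite hz.
by move=> /ltnW.
Qed.

End Dist.

Section Char.
Variables (V : finType) (r : rel V).

Lemma le_AB (g h : V -> V -> nat) :
  (forall u, g u u = 0) -> (forall u w v, r u w -> g u v <= (g w v).+1) ->
  (forall u v, u != v -> exists w, r u w /\ h u v = (h w v).+1) ->
  forall u v, g u v <= h u v.
Proof.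
move=> g0 g1 h2 u v; move: {2}(h u v) (leqnn (h u v)) => n.
elim: n u => [|n IH] u hu.
  case: (eqVneq u v) => [->|neq]; first by rewrite g0.
  by have [w [_ hw]] := h2 _ _ neq; rewrite hw in hu.
case: (eqVneq u v) => [->|neq]; first by rewrite g0.
have [w [ruw hw]] := h2 _ _ neq.
apply: leq_trans (g1 _ _ v ruw) _; rewrite hw ltnS; apply: IH.
by rewrite -ltnS -hw.
Qed.

Lemma char_dist (f : V -> V -> nat) :
  (forall u, f u u = 0) -> (forall u w v, r u w -> f u v <= (f w v).+1) ->
  (forall u v, u != v -> exists w, r u w /\ f u v = (f w v).+1) ->
  connected r /\ forall u v, dist r u v = f u v.
Proof.
move=> f0 f1 f2.
have con : connected r.
  move=> u v; move: {2}(f u v) (leqnn (f u v)) => n.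
  elim: n u => [|n IH] u hu.
    case: (eqVneq u v) => [->|neq]; first by rewrite connect0.
    by have [w [_ hw]] := f2 _ _ neq; rewrite hw in hu.
  case: (eqVneq u v) => [->|neq]; first by rewrite connect0.
  have [w [ruw hw]] := f2 _ _ neq.
  apply: connect_trans (connect1 ruw) _; apply: IH; by rewrite -ltnS -hw.
split => // u v; apply/eqP; rewrite eqn_leq; apply/andP; split.
  apply: le_AB => //; [exact: distuu|exact: distD1].
apply: le_AB => //; exact: distD2.
Qed.

End Char.


Definition UC (V : finType) (r : rel V) := forall b0 v w c, r b0 w -> r b0 c -> w != c ->
  dist r w v <= dist r b0 v -> dist r c v <= dist r b0 v -> False.

Lemma acyc_UC (V : finType) (r : rel V) : symmetric r -> UC r -> acyclic r.
Proof.
move=> rsym uc [|v0 c'] //= sz; apply/negP => /andP[cc uq].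
case: (@arg_maxnP V v0 (fun z => z \in v0 :: c') (fun z => dist r z v0) (mem_head _ _)) => b0 hb0 hmax.
case: (rot_to hb0) => i s' hrot.
have : ucycleb r (b0 :: s') by rewrite /ucycleb -hrot rot_cycle rot_uniq cc uq.
have hmem : forall z, z \in s' -> z \in v0 :: c' by move=> z zs; rewrite -(mem_rot i) hrot inE zs orbT.
have hsz : 2 <= size s'.
  have : size (b0 :: s') = size (v0 :: c') by rewrite -hrot size_rot.
  move: sz => /=; lia.
case: s' hrot hmem hsz => [|w [|y s'']] // hrot hmem _.
rewrite /ucycleb /= rcons_path => /and5P[/and4P[rb0w _ _ rl] _ wn _ _].
apply: (uc b0 v0 w (last y s'') rb0w); first by rewrite rsym.
- apply: contraNneq wn => ->; exact: mem_last.
- by apply: hmax; apply: hmem; rewrite mem_head.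
- apply: hmax; apply: hmem; rewrite inE; apply/orP; right; exact: mem_last.
Qed.

Section Tree.
Variables (V : finType) (e : rel V).
Hypotheses (e_sym : symmetric e) (e_irr : irreflexive e) (econ : connected e) (eacyc : acyclic e).

Lemma rev_walk x p : path e x p -> path e (last x p) (rev (belast x p)) /\ last (last x p) (rev (belast x p)) = x.
Proof.
move=> pp; split.
  by rewrite rev_path; rewrite (eq_path (e' := e)) // => a b; rewrite e_sym.
case: p {pp} => [|y p] //=; by rewrite rev_cons last_rcons.
Qed.

Lemma CY b w c q : e b w -> e b c -> w != c -> path e w q -> last w q = c -> b \notin w :: q -> False.
Proof.
move=> ebw ebc neq pq lq bn; move: lq; case: (shortenP pq) => p' pp' up' sub lq.
have hp' : 0 < size p'.
  by case: p' {pp' up' sub} lq => //= lq; rewrite lq eqxx in neq.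
have bn' : b \notin w :: p'.
  apply: contra bn; rewrite !inE => /orP[->//|/sub ->]; by rewrite orbT.
have := eacyc (c := b :: w :: p'); rewrite /= !ltnS hp' => /(_ isT).
rewrite /ucycleb /= rcons_path ebw pp' lq e_sym ebc; move: up' => /= /andP[-> ->]; by rewrite bn'.
Qed.

Lemma tree_UC : UC e.
Proof.
move=> b0 v w c eb0w eb0c neq hw hc.
have [pw [ppw lpw hpw]] := walk_down econ (erefl (dist e w v)).
have [pc [ppc lpc hpc]] := walk_down econ (erefl (dist e c v)).
have [pr lr] := rev_walk ppc.
apply: (CY eb0w eb0c neq (q := pw ++ rev (belast c pc))).
- by rewrite cat_path ppw lpw -lpc pr.
- by rewrite last_cat lpw -lpc lr.
rewrite !inE negb_or; apply/andP; split.
  by apply: contraTneq eb0w => ->; rewrite e_irr.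
rewrite mem_cat negb_or; apply/andP; split.
  apply/negP => /hpw; rewrite ltnNge; by move/negP; apply.
rewrite mem_rev; apply/negP => /mem_belast; rewrite inE => /orP[/eqP E|/hpc].
  by rewrite E e_irr in eb0c.
rewrite ltnNge; by move/negP; apply.
Qed.

End Tree.

Section Cross.
Variables (V : finType) (e : rel V).
Hypotheses (econ : connected e).
Variables (S : {set V}) (a b : V).
Hypotheses (eab : e a b)
  (cut : forall s t, s \in S -> t \notin S -> e s t -> s = a /\ t = b).
Local Notation d := (dist e).
Lemma cross0 s t : s \in S -> t \notin S -> d s t = d s a + (d b t).+1.
Proof.
move=> sS tS; apply/eqP; rewrite eqn_leq; apply/andP; split.
  have := dist_tri econ s a t; have := distD1 econ t eab; lia.
move: {2}(d s t) (leqnn (d s t)) => n; elim: n s sS => [|n IH] s sS hs.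
  by move: hs; rewrite leqn0 => /eqP/(dist0 econ) E; move: tS; rewrite -E sS.
have neq : s != t by apply: contraNneq tS => <-.
have [w [esw hw]] := distD2 econ neq.
case: (boolP (w \in S)) => wS.
  have := IH w wS; rewrite -ltnS -hw => /(_ hs) h.
  have := distD1 econ a esw; lia.
have [E1 E2] := cut sS wS esw; subst s w; by rewrite distuu // hw.
Qed.
End Cross.

Section Rot.
Variables (V : finType) (e : rel V).
Hypotheses (e_sym : symmetric e) (e_irr : irreflexive e) (econ : connected e) (eacyc : acyclic e).
Variables (S : {set V}) (a b b1 : V).
Hypotheses (aS : a \in S) (bS : b \notin S) (eab : e a b)
  (cut : forall s t, s \in S -> t \notin S -> e s t -> s = a /\ t = b)
  (ebb1 : e b b1) (b1S : b1 \notin S).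

Local Notation d := (dist e).

Lemma cross s t : s \in S -> t \notin S -> d s t = d s a + (d b t).+1.
Proof.
move=> sS tS; apply/eqP; rewrite eqn_leq; apply/andP; split.
  have := dist_tri econ s a t; have := distD1 econ t eab; lia.
move: {2}(d s t) (leqnn (d s t)) => n; elim: n s sS => [|n IH] s sS hs.
  by move: hs; rewrite leqn0 => /eqP/(dist0 econ) E; move: tS; rewrite -E sS.
have neq : s != t by apply: contraNneq tS => <-.
have [w [esw hw]] := distD2 econ neq.
case: (boolP (w \in S)) => wS.
  have := IH w wS; rewrite -ltnS -hw => /(_ hs) h.
  have := distD1 econ a esw; lia.
have [E1 E2] := cut sS wS esw; subst s w; by rewrite distuu // hw.
Qed.

Definition e' : rel V := fun u v =>
  [|| (u == a) && (v == b1), (u == b1) && (v == a) | e u v && ((u \in S) == (v \in S))].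

Lemma ab1 : a != b1. Proof. by apply: contraNneq b1S => <-. Qed.

Lemma e'_cases u w : e' u w ->
  [\/ u = a /\ w = b1, u = b1 /\ w = a | e u w /\ (u \in S) = (w \in S)].
Proof.
by move=> /or3P[/andP[/eqP-> /eqP->]|/andP[/eqP-> /eqP->]|/andP[h /eqP h2]]; [apply: Or31|apply: Or32|apply: Or33].
Qed.

Lemma e'_same u w : e u w -> (u \in S) = (w \in S) -> e' u w.
Proof. by move=> h1 h2; rewrite /e' h1 h2 eqxx !orbT. Qed.

Lemma e'_sym : symmetric e'.
Proof.
move=> u v; rewrite /e' e_sym [(v \in S) == _]eq_sym.
by case: (u == a); case: (v == b1); case: (u == b1); case: (v == a).
Qed.

Lemma e'_irr : irreflexive e'.
Proof.
move=> u; rewrite /e' e_irr /= orbF; apply/negP => /orP[]/andP[/eqP-> /eqP E];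
by move: ab1; rewrite E eqxx.
Qed.

Definition f u v := if (u \in S) == (v \in S) then d u v
  else if u \in S then d u a + (d b1 v).+1 else d v a + (d b1 u).+1.

Lemma f_same u v : (u \in S) = (v \in S) -> f u v = d u v.
Proof. by rewrite /f => ->; rewrite eqxx. Qed.
Lemma f_SN u v : u \in S -> v \notin S -> f u v = d u a + (d b1 v).+1.
Proof. by rewrite /f => -> /negbTE ->. Qed.
Lemma f_NS u v : u \notin S -> v \in S -> f u v = d v a + (d b1 u).+1.
Proof. by rewrite /f => /negbTE -> ->. Qed.

Lemma f0 u : f u u = 0.
Proof. by rewrite f_same // distuu. Qed.

Lemma f1 u w v : e' u w -> f u v <= (f w v).+1.
Proof.
have ds := dist_sym econ e_sym.
case/e'_cases => [[-> ->]|[-> ->]|[euw uw]].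
- case: (boolP (v \in S)) => vS.
    by rewrite f_same ?aS ?vS // f_NS // distuu // (ds a v); lia.
  by rewrite f_SN // f_same ?(negbTE vS) ?(negbTE b1S) // distuu.
- case: (boolP (v \in S)) => vS.
    by rewrite f_NS // f_same ?aS ?vS // distuu // (ds a v); lia.
  by rewrite f_same ?(negbTE vS) ?(negbTE b1S) // f_SN // distuu //; lia.
case: (boolP (u \in S)) => uS; case: (boolP (v \in S)) => vS.
- have wS : w \in S by rewrite -uw.
  by rewrite !f_same ?uS ?vS ?wS //; apply: distD1.
- have wS : w \in S by rewrite -uw.
  rewrite f_SN // f_SN //; have := distD1 econ a euw; lia.
- have wS : w \notin S by rewrite -uw.
  rewrite f_NS // f_NS // !(ds b1).
  have := distD1 econ b1 euw; lia.
- have wS : w \notin S by rewrite -uw.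
  by rewrite !f_same ?(negbTE uS) ?(negbTE vS) ?(negbTE wS) //; apply: distD1.
Qed.

Lemma cross_b s : s \in S -> d s b = (d s a).+1.
Proof. by move=> sS; rewrite cross // distuu addn1. Qed.

Lemma f2 u v : u != v -> exists w, e' u w /\ f u v = (f w v).+1.
Proof.
move=> neq; case: (boolP (u \in S)) => uS; case: (boolP (v \in S)) => vS.
- have [w [euw hw]] := distD2 econ neq.
  case: (boolP (w \in S)) => wS.
    by exists w; rewrite e'_same ?uS ?wS // !f_same ?uS ?vS ?wS.
  have [E1 E2] := cut uS wS euw; subst u w.
  have := cross_b vS; rewrite (dist_sym econ e_sym v b) (dist_sym econ e_sym v a); lia.
- case: (eqVneq u a) => [->|ua].
    exists b1; split; first by rewrite /e' !eqxx.
    by rewrite f_SN // f_same ?(negbTE vS) ?(negbTE b1S) // distuu.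
  have [w [euw hw]] := distD2 econ ua.
  have wS : w \in S by apply: contraT => wS; have [] := cut uS wS euw; move/eqP: ua.
  by exists w; rewrite e'_same ?uS ?wS // !f_SN // hw.
- case: (eqVneq u b1) => [->|ub].
    exists a; split; first by rewrite /e' !eqxx orbT.
    by rewrite f_NS // f_same ?aS ?vS // distuu // addn1 (dist_sym econ e_sym v a).
  have [w [euw hw]] := distD2 econ ub.
  case: (boolP (w \in S)) => wS.
    have ewu : e w u by rewrite e_sym.
    have [E1 E2] := cut wS uS ewu.
    subst u w; have := cross aS b1S; rewrite distuu add0n.
    rewrite hw => h; exfalso; lia.
  exists w; rewrite e'_same ?(negbTE uS) ?(negbTE wS) //; split => //.
  by rewrite !f_NS // !(dist_sym econ e_sym b1) hw addnS.
- have [w [euw hw]] := distD2 econ neq.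
  case: (boolP (w \in S)) => wS.
    have ewu : e w u by rewrite e_sym.
    have [E1 E2] := cut wS uS ewu.
    subst u w; have := cross aS vS; rewrite distuu add0n; lia.
  by exists w; rewrite e'_same ?(negbTE uS) ?(negbTE wS) // !f_same ?(negbTE uS) ?(negbTE vS) ?(negbTE wS).
Qed.

Lemma rot_char : connected e' /\ forall u v, dist e' u v = f u v.
Proof. apply: char_dist; [exact: f0|exact: f1|exact: f2]. Qed.


Lemma nbr_old u z : e' u z -> u != a -> u != b1 -> e u z /\ (u \in S) = (z \in S).
Proof.
by case/e'_cases => [[E _]|[E _]|//]; rewrite E eqxx.
Qed.

Lemma rot_UC : UC e'.
Proof.
have [con' df] := rot_char; have uce := tree_UC e_sym e_irr econ eacyc.
have ds := dist_sym econ e_sym.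
move=> b0 v w c eb0w eb0c neq; rewrite !df => hw hc.
case: (boolP (b0 \in S)) => b0S; case: (boolP (v \in S)) => vS.
- have key : forall z, e' b0 z -> f z v <= f b0 v -> e b0 z /\ d z v <= d b0 v.
    move=> z /e'_cases [[E1 E2]|[E1 E2]|[ez sz]].
    + subst b0 z; rewrite f_NS // f_same ?aS ?vS // distuu // ds; lia.
    + by rewrite E1 (negbTE b1S) in b0S.
    + by rewrite !f_same -?sz ?b0S ?vS.
  have [h1 h2] := key w eb0w hw; have [h3 h4] := key c eb0c hc.
  exact: (uce b0 v w c).
- case: (eqVneq b0 a) => [E|b0a].
    subst b0.
    have key : forall z, e' a z -> f z v <= f a v -> z = b1.
      move=> z /e'_cases [[_ ->]//|[E _]|[ez sz]]; first by move: ab1; rewrite E eqxx.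
      rewrite !f_SN -?sz // distuu // add0n => h.
      have : d z a = 0 by apply/eqP; rewrite -leqn0 -(leq_add2r (d b1 v).+1).
      by move/(dist0 econ) => E; rewrite E e_irr in ez.
    by move: neq; rewrite (key w eb0w hw) (key c eb0c hc) eqxx.
  have b0b1 : b0 != b1 by apply: contraNneq b1S => <-.
  have key : forall z, e' b0 z -> f z v <= f b0 v -> e b0 z /\ d z a <= d b0 a.
    move=> z /nbr_old /(_ b0a b0b1) [ez sz].
    by rewrite !f_SN -?sz // leq_add2r.
  have [h1 h2] := key w eb0w hw; have [h3 h4] := key c eb0c hc.
  exact: (uce b0 a w c).
- case: (eqVneq b0 b1) => [E|b0b1].
    subst b0.
    have key : forall z, e' b1 z -> f z v <= f b1 v -> z = a.
      move=> z /e'_cases [[E _]|[_ ->]//|[ez sz]]; first by move: ab1; rewrite E eqxx.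
      rewrite !f_NS -?sz // distuu // leq_add2l ltnS leqn0 => /eqP h.
      have : d b1 z = 0 by [].
      by move/(dist0 econ) => E; rewrite -E e_irr in ez.
    by move: neq; rewrite (key w eb0w hw) (key c eb0c hc) eqxx.
  have b0a : b0 != a by apply: contraNneq b0S => ->.
  have key : forall z, e' b0 z -> f z v <= f b0 v -> e b0 z /\ d z b1 <= d b0 b1.
    move=> z /nbr_old /(_ b0a b0b1) [ez sz].
    by rewrite !f_NS -?sz // (ds z b1) (ds b0 b1) leq_add2l ltnS.
  have [h1 h2] := key w eb0w hw; have [h3 h4] := key c eb0c hc.
  exact: (uce b0 b1 w c).
- have key : forall z, e' b0 z -> f z v <= f b0 v -> e b0 z /\ d z v <= d b0 v.
    move=> z /e'_cases [[E1 E2]|[E1 E2]|[ez sz]].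
    + by rewrite E1 aS in b0S.
    + subst b0 z; rewrite f_SN // f_same ?(negbTE vS) ?(negbTE b1S) // distuu //; lia.
    + by rewrite !f_same -?sz ?(negbTE b0S) ?(negbTE vS).
  have [h1 h2] := key w eb0w hw; have [h3 h4] := key c eb0c hc.
  exact: (uce b0 v w c).
Qed.

Lemma rot_tree : is_tree e'.
Proof.
have [con' _] := rot_char.
split => //; first by split; [exact: e'_sym|exact: e'_irr].
apply: acyc_UC; [exact: e'_sym|exact: rot_UC].
Qed.

Hypothesis hS : forall s, s \in S -> ecc e s < diameter e.

Lemma dist_le_ecc (r : rel V) u v : dist r u v <= ecc r u.
Proof. by rewrite /ecc; apply: (@leq_bigmax V (fun v => dist r u v)). Qed.
Lemma ecc_le_diam (r : rel V) u : ecc r u <= diameter r.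
Proof. by rewrite /diameter; apply: (@leq_bigmax V (fun u => ecc r u)). Qed.

Lemma rot_diam : diameter e' = diameter e.
Proof.
have [con' df] := rot_char; have ds := dist_sym econ e_sym.
have eb1b : e b1 b by rewrite e_sym.
apply/eqP; rewrite eqn_leq; apply/andP; split.
  apply/bigmax_leqP => u _; apply/bigmax_leqP => v _; rewrite df.
  have hd : forall x y, d x y <= diameter e.
    by move=> x y; apply: leq_trans (dist_le_ecc _ x y) (ecc_le_diam _ x).
  case: (boolP (u \in S)) => uS; case: (boolP (v \in S)) => vS.
  - by rewrite f_same ?uS ?vS.
  - rewrite f_SN //; have := cross uS vS; have := distD1 econ v eb1b.
    have := hS uS; have := dist_le_ecc e u v; lia.
  - rewrite f_NS //; have := cross vS uS; have := distD1 econ u eb1b.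
    have := hS vS; have := dist_le_ecc e v u; lia.
  - by rewrite f_same ?(negbTE uS) ?(negbTE vS).
have V0 : 0 < #|V| by apply/card_gt0P; exists a.
have [u0 hu0] := eq_bigmax (fun u => ecc e u) V0.
have [v0 hv0] := eq_bigmax (fun v => dist e u0 v) V0.
have E : diameter e = d u0 v0 by rewrite /diameter hu0 /ecc hv0.
have u0S : u0 \notin S.
  by apply/negP => /hS; rewrite E -hv0 ltnn.
have v0S : v0 \notin S.
  apply/negP => /hS; rewrite E ds ltnNge => /negP; apply; exact: dist_le_ecc.
rewrite E; apply: leq_trans (ecc_le_diam _ u0); apply: leq_trans (dist_le_ecc _ u0 v0).
by rewrite df f_same ?(negbTE u0S) ?(negbTE v0S).
Qed.

Definition Hz z u v := if (u \in S) && (v \notin S) then d z v else 0.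
Definition Out z := \sum_v (if v \notin S then d z v else 0).

Lemma pointwise u v : f u v + (Hz b u v + Hz b v u) = d u v + (Hz b1 u v + Hz b1 v u).
Proof.
have ds := dist_sym econ e_sym.
rewrite /Hz; case: (boolP (u \in S)) => uS; case: (boolP (v \in S)) => vS /=.
- by rewrite f_same ?uS ?vS.
- rewrite f_SN // (cross uS vS); lia.
- rewrite f_NS // (ds u v) (cross vS uS); lia.
- by rewrite f_same ?(negbTE uS) ?(negbTE vS).
Qed.

Lemma sumH z : \sum_u \sum_v (Hz z u v + Hz z v u) = 2 * (#|S| * Out z).
Proof.
have hX : \sum_u \sum_v Hz z u v = #|S| * Out z.
  rewrite -sum_nat_const [RHS]big_mkcond /=; apply: eq_bigr => u _.
  rewrite /Out; case: (boolP (u \in S)) => uS.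
    by apply: eq_bigr => v _; rewrite /Hz uS.
  by apply: big1 => v _; rewrite /Hz (negbTE uS).
rewrite (eq_bigr (fun u => \sum_v Hz z u v + \sum_v Hz z v u)); last by move=> u _; rewrite big_split.
rewrite big_split /= [X in _ + X]exchange_big /= hX; lia.
Qed.

Lemma rot_wiener : wiener e' + #|S| * Out b = wiener e + #|S| * Out b1.
Proof.
have [con' df] := rot_char.
have E : \sum_u \sum_v dist e' u v + 2 * (#|S| * Out b) = \sum_u \sum_v d u v + 2 * (#|S| * Out b1).
  rewrite -!sumH -!big_split /=; apply: eq_bigr => u _; rewrite -!big_split /=.
  by apply: eq_bigr => v _; rewrite df pointwise.
rewrite /wiener -!divn2; move: E; lia.
Qed.

End Rot.

Section Choose.
Variables (V : finType) (e : rel V).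
Hypotheses (e_sym : symmetric e) (e_irr : irreflexive e) (econ : connected e) (eacyc : acyclic e).
Variables (S : {set V}) (b b1 b2 : V).
Hypotheses (bS : b \notin S) (ebb1 : e b b1) (ebb2 : e b b2) (neq : b1 != b2).

Lemma choose_out : Out e S b < Out e S b1 \/ Out e S b < Out e S b2.
Proof.
have uce := tree_UC e_sym e_irr econ eacyc.
have pw : forall v, 2 * dist e b v <= dist e b1 v + dist e b2 v.
  move=> v; have h1 := distD1 econ v ebb1; have h2 := distD1 econ v ebb2.
  case: (leqP (dist e b1 v) (dist e b v)) => c1; case: (leqP (dist e b2 v) (dist e b v)) => c2; try lia.
  by case: (uce b v b1 b2 ebb1 ebb2 neq c1 c2).
have : 2 * Out e S b < Out e S b1 + Out e S b2.
  rewrite /Out big_distrr -big_split /= (bigD1 b) //= [X in _ < X](bigD1 b) //= bS.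
  rewrite distuu // muln0 add0n.
  have -> : dist e b1 b + dist e b2 b = 2.
    have := distD1 econ b (w := b) (u := b1); rewrite e_sym ebb1 distuu // => /(_ isT) h1.
    have := distD1 econ b (w := b) (u := b2); rewrite e_sym ebb2 distuu // => /(_ isT) h2.
    have : dist e b1 b != 0 by apply/eqP => /(dist0 econ) E; move: ebb1; rewrite E e_irr.
    have : dist e b2 b != 0 by apply/eqP => /(dist0 econ) E; move: ebb2; rewrite E e_irr.
    lia.
  rewrite add2n ltnS; apply: leqW; apply: leq_sum => v _; case: (v \notin S) => //; exact: pw.
lia.
Qed.

End Choose.

Section Iter.
Variables (V : finType) (e : rel V).
Hypotheses (e_sym : symmetric e) (e_irr : irreflexive e) (econ : connected e).

Definition Inv (S : {set V}) a b := [/\ a \in S, b \notin S, e a b,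
  (forall s t, s \in S -> t \notin S -> e s t -> s = a /\ t = b) &
  (forall s, s \in S -> ecc e s < diameter e)].

Lemma iterate k : forall S a b, #|~: S| <= k -> Inv S a b ->
  exists S a b b1 b2, [/\ Inv S a b, e b b1, e b b2, b1 != a & (b2 != a) && (b1 != b2)].
Proof.
elim: k => [|k IH] S a b hk [aS bS eab cut hS].
  have : 0 < #|~: S| by apply/card_gt0P; exists b; rewrite inE.
  by rewrite leqNgt in hk; move/negP: hk.
have ds := dist_sym econ e_sym.
have cr := cross0 econ eab cut.
have D0 : 0 < diameter e by have := hS a aS; lia.
case: (pickP (fun z => e b z && (z != a))) => [b1 /andP[eb1 b1a] | none].
  case: (pickP (fun z => [&& e b z, z != a & z != b1])) => [b2 /and3P[eb2 b2a b2b1] | none2].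
    exists S, a, b, b1, b2; split => //; by rewrite b2a eq_sym b2b1.
  (* degree 2 *)
  have b1S : b1 \notin S.
    apply/negP => b1S; have eb1b : e b1 b by rewrite e_sym.
    have [E _] := cut _ _ b1S bS eb1b.
    by rewrite E eqxx in b1a.
  have b1b : b1 != b by apply: contraTneq eb1 => ->; rewrite e_irr.
  apply: (IH (b |: S) b b1).
    have : #|~: (b |: S)| < #|~: S|.
      apply: proper_card; rewrite setCU; apply/properP; split; first exact: subsetIr.
      by exists b; rewrite !inE ?eqxx //.
    lia.
  split.
  - by rewrite setU11.
  - by rewrite !inE negb_or b1b.
  - done.
  - move=> s t; rewrite !inE negb_or => /orP[/eqP ->|sS] /andP[tb tS] est.
      split => //; apply/eqP; move: (none2 t); rewrite /= est /=.
      have ta : t != a by apply: contraNneq tS => ->.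
      by rewrite ta /= => /negbFE.
    by have [_ E] := cut _ _ sS tS est; rewrite E eqxx in tb.
  - move=> s; rewrite !inE => /orP[/eqP ->|/hS //].
    have hlt : forall v, dist e b v < diameter e.
      move=> v; case: (boolP (v \in S)) => vS.
        rewrite ds; apply: leq_ltn_trans (hS v vS); exact: dist_le_ecc.
      have := cr a v aS vS; rewrite distuu // add0n => h.
      apply: leq_trans (hS a aS); apply: leq_trans (dist_le_ecc _ a v).
      by rewrite h.
    have : ecc e b <= (diameter e).-1.
      apply/bigmax_leqP => v _; have := hlt v; lia.
    lia.
(* degree 1 *)
exfalso.
have V0 : 0 < #|V| by apply/card_gt0P; exists a.
have [u0 hu0] := eq_bigmax (fun u => ecc e u) V0.
have [v0 hv0] := eq_bigmax (fun v => dist e u0 v) V0.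
have E : diameter e = dist e u0 v0 by rewrite /diameter hu0 /ecc hv0.
have u0S : u0 \notin S.
  by apply/negP => /hS; rewrite E -hv0 ltnn.
have v0S : v0 \notin S.
  apply/negP => /hS; rewrite E ds ltnNge => /negP; apply; exact: dist_le_ecc.
have isb : forall z, z \notin S -> z = b.
  move=> z zS; apply/eqP; rewrite eq_sym; apply/negP => /negP nbz.
  have [w [ebw hw]] := distD2 econ nbz.
  have wa : w = a.
    by apply/eqP; move: (none w); rewrite /= ebw /= => /negbFE.
  subst w; have := cr a z aS zS; rewrite distuu // add0n; lia.
move: D0; rewrite E (isb _ u0S) (isb _ v0S) distuu //.
Qed.

End Iter.

Theorem mainTheorem3 (n d : nat) (V : finType) (e : rel V) (x : V) :
  is_tree e -> #|V| = n -> diameter e = d ->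
  (forall (V' : finType) (e' : rel V'),
      is_tree e' -> #|V'| = n -> diameter e' = d -> wiener e' <= wiener e) ->
  leaf e x -> ecc e x = d.
Proof.
move=> [[e_sym e_irr] econ eacyc] hn hd hmax hleaf.
apply/eqP; rewrite eqn_leq -{1}hd ecc_le_diam /=; rewrite leqNgt; apply/negP => hlt.
move/card1P: hleaf => [y hy].
have exy : e x y by have := hy y; rewrite !inE eqxx.
have xuniq : forall z, e x z -> z = y by move=> z exz; have := hy z; rewrite !inE exz => /esym /eqP.
have inv0 : Inv e [set x] x y.
  split.
  - by rewrite set11.
  - by rewrite inE; apply: contraTneq exy => ->; rewrite e_irr.
  - done.
  - by move=> s t; rewrite !inE => /eqP -> _ /xuniq ->.
  - by move=> s; rewrite inE => /eqP ->; rewrite hd.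
have [S [a [b [b1 [b2 [[aS bS eab cut hS] eb1 eb2 b1a /andP[b2a b12]]]]]]] :=
  iterate e_sym e_irr econ (leqnn _) inv0.
have notS : forall z, e b z -> z != a -> z \notin S.
  move=> z ebz za; apply/negP => zS; have ezb : e z b by rewrite e_sym.
  have [E _] := cut z b zS bS ezb.
  by rewrite E eqxx in za.
have key : forall bb, e b bb -> bb != a -> Out e S b < Out e S bb -> False.
  move=> bb ebb bba hlt2.
  have bbS := notS bb ebb bba.
  have ht := rot_tree e_sym e_irr econ eacyc aS bS eab cut ebb bbS.
  have hdi := rot_diam e_sym econ aS bS eab cut ebb bbS hS.
  have hw := rot_wiener e_sym econ aS bS eab cut ebb bbS.
  have := hmax V (e' e S a bb) ht hn; rewrite hdi hd => /(_ erefl) hle.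
  have S0 : 0 < #|S| by apply/card_gt0P; exists a.
  have : #|S| * Out e S b < #|S| * Out e S bb by rewrite ltn_pmul2l.
  lia.
case: (choose_out e_sym e_irr econ eacyc bS eb1 eb2 b12) => h.
  exact: (key b1 eb1 b1a h).
exact: (key b2 eb2 b2a h).
Qed.
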